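(* Let $P_1(z)=1+12z+9z^2$, $P_2(z)=1+4z+3z^2$, $P_3(z)=1+8z+8z^2$, $P_4(z)=1+15z+45z^2+27z^3$ and $P_5(z)=1+13z+21z^2+9z^3$. For each $i$, let $N_i$ be the number of pairwise non-isomorphic connected finite simple graphs whose independence polynomial is $P_i$. Then $N_i>0$ for each $i$; in particular $N_1\ge10$, $N_2=1$, $N_3\ge25$, $N_4\ge4$ and $N_5\ge5$.
   Context: For a finite simple graph $G$, the independence polynomial is $I_G(z)=\sum_{i\ge0} a_i z^i$, where $a_i$ is the number of sets of $i$ pairwise non-adjacent vertices of $G$ (with $a_0=1$). *)

(* Defs.v *)
From HB Require Import structures.
From mathcomp Require Import all_boot all_order all_algebra.
Set Implicit Arguments. Unset Strict Implicit. Unset Printing Implicit Defensive.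
Import GRing.Theory.
Local Open Scope ring_scope.

Record fgraph := FGraph {
  vert : finType;
  adj : rel vert;
  adj_sym : symmetric adj;
  adj_irr : irreflexive adj
}.

Definition independent (G : fgraph) (S : {set vert G}) : bool :=
  [forall x in S, forall y in S, ~~ adj x y].

Definition indep_count (G : fgraph) (i : nat) : nat :=
  #|[set S : {set vert G} | independent S & #|S| == i]|.

Definition indep_poly (G : fgraph) : {poly int} :=
  \poly_(i < #|vert G|.+1) (indep_count G i)%:Z.

Definition connected_graph (G : fgraph) : Prop :=
  (0 < #|vert G|)%N /\ forall x y : vert G, connect (@adj G) x y.

Definition isomorphic (G H : fgraph) : Prop :=
  exists f : vert G -> vert H,
    bijective f /\ forall x y, adj (f x) (f y) = adj x y.

Definition at_least_classes (k : nat) (P : {poly int}) : Prop :=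
  exists F : 'I_k -> fgraph,
    (forall i, connected_graph (F i) /\ indep_poly (F i) = P) /\
    (forall i j, i != j -> ~ isomorphic (F i) (F j)).

Definition exactly_one_class (P : {poly int}) : Prop :=
  (exists G, connected_graph G /\ indep_poly G = P) /\
  (forall G H, connected_graph G -> indep_poly G = P ->
               connected_graph H -> indep_poly H = P -> isomorphic G H).

Definition P1 : {poly int} := 1 + 12%:R *: 'X + 9%:R *: 'X^2.
Definition P2 : {poly int} := 1 + 4%:R *: 'X + 3%:R *: 'X^2.
Definition P3 : {poly int} := 1 + 8%:R *: 'X + 8%:R *: 'X^2.
Definition P4 : {poly int} := 1 + 15%:R *: 'X + 45%:R *: 'X^2 + 27%:R *: 'X^3.
Definition P5 : {poly int} := 1 + 13%:R *: 'X + 21%:R *: 'X^2 + 9%:R *: 'X^3.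

(* Main.v *)
Require Import Defs.
From mathcomp Require Import all_boot all_order all_algebra.
Set Implicit Arguments. Unset Strict Implicit. Unset Printing Implicit Defensive.

Lemma card_count (T : finType) (A : {pred T}) : #|A| = count (mem A) (enum T).
Proof.
rewrite cardE -size_filter; apply: perm_size; apply: uniq_perm.
- exact: enum_uniq.
- exact/filter_uniq/enum_uniq.
- by move=> x; rewrite mem_enum mem_filter mem_enum andbT.
Qed.

Lemma card_set_ord n (p : pred nat) : #|[set x : 'I_n | p (val x)]| = count p (iota 0 n).
Proof.
rewrite card_count -val_enum_ord count_map; apply: eq_count => x /=.
by rewrite !inE.
Qed.

Definition adjn (es : seq (nat*nat)) (x y : nat) : bool :=
  (x != y) && has (fun e => (e == (x,y)) || (e == (y,x))) es.

Lemma adjn_sym es x y : adjn es x y = adjn es y x.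
Proof.
rewrite /adjn eq_sym; congr (_ && _); apply: eq_has => e /=; by rewrite orbC.
Qed.

Lemma adjn_irr es x : adjn es x x = false.
Proof. by rewrite /adjn eqxx. Qed.

Definition mkG (n : nat) (es : seq (nat*nat)) : Defs.fgraph :=
  @FGraph 'I_n (fun x y => adjn es x y) (fun x y => adjn_sym es x y) (fun x => adjn_irr es x).

Fixpoint cntf {A : Type} (r : A -> A -> bool) (s : seq A) (ok : A -> bool) (k : nat) {struct s} : nat :=
  match s with
  | [::] => (k == 0)
  | v :: s' => match k with
     | 0 => 1
     | k'.+1 => cntf r s' ok k + (if ok v then cntf r s' (fun u => ok u && ~~ r v u) k' else 0)
     end
  end.

Lemma cntf_map (A B : Type) (f : A -> B) (r : A -> A -> bool) (r' : B -> B -> bool)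
  (s : seq A) : (forall x y, r' (f x) (f y) = r x y) ->
  forall ok ok' k, (forall x, ok' (f x) = ok x) -> cntf r' (map f s) ok' k = cntf r s ok k.
Proof.
move=> Hr; elim: s => [|v s IH] ok ok' k Hok //=.
case: k => [|k] //; rewrite (IH ok ok') // Hok.
case: (ok v) => //; congr (_ + _); apply: IH => x; by rewrite Hok Hr.
Qed.

Section Count.
Variable G : Defs.fgraph.
Local Notation T := (vert G).

Lemma indepP (S : {set T}) :
  reflect (forall x y, x \in S -> y \in S -> ~~ adj x y) (independent S).
Proof.
apply: (iffP forall_inP) => H x.
- move=> y xS yS; exact: (forall_inP (H x xS)).
- move=> xS; apply/forall_inP => y; exact: H.
Qed.

Definition Nset (s : seq T) (ok : pred T) (k : nat) :=
  #|[set S : {set T} | [forall x in S, (x \in s) && ok x] && independent S && (#|S| == k)]|.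

Lemma Nset0 s ok : Nset s ok 0 = 1.
Proof.
rewrite /Nset -(cards1 (set0 : {set T})); apply: eq_card => S; rewrite !inE.
apply/idP/idP.
- by case/andP => _; rewrite cards_eq0.
- move/eqP->; rewrite cards0 eqxx andbT; apply/andP; split.
  + by apply/forall_inP => x; rewrite inE.
  + by apply/indepP => x y; rewrite inE.
Qed.

Lemma Nset_cntf s : uniq s -> forall ok k, Nset s ok k = cntf (@adj G) s ok k.
Proof.
elim: s => [|v s IH] Hu ok k.
- case: k => [|k]; first exact: Nset0.
  rewrite /= /Nset; apply: eq_card0 => S; rewrite !inE; apply/negP.
  case/andP => /andP [/forall_inP H _] /eqP Hc.
  have : S != set0 by rewrite -card_gt0 Hc.
  by case/set0Pn => x /H.
- move/andP: Hu => [vs Hu].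
  case: k => [|k]; first exact: Nset0.
  rewrite /= /Nset -(cardsID [set S : {set T} | v \in S]) addnC.
  congr (_ + _).
  + rewrite -(IH Hu ok k.+1) /Nset; apply: eq_card => S; rewrite !inE.
    case vS: (v \in S) => /=.
    * apply/esym/negP => /andP [/andP [/forall_inP H _] _].
      by move: (H v vS); rewrite (negbTE vs).
    * congr (_ && _ && _); apply: eq_forallb_in => x xS; rewrite in_cons.
      case: eqP => //= xv; by rewrite -xv xS in vS.
  + case okv: (ok v).
    * have Hinj : {in [set S : {set T} | [forall x in S, (x \in s) &&
            (ok x && ~~ adj v x)] && independent S && (#|S| == k)] &,
          injective (fun S => v |: S)}.
        move=> S1 S2; rewrite !inE => /andP [/andP [/forall_inP H1 _] _]
              /andP [/andP [/forall_inP H2 _] _] E.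
        have v1 : v \notin S1 by apply/negP => /H1 /andP []; rewrite (negbTE vs).
        have v2 : v \notin S2 by apply/negP => /H2 /andP []; rewrite (negbTE vs).
        by rewrite -(setU1K v1) E setU1K.
      rewrite -(IH Hu) /Nset -(card_in_imset Hinj); apply: eq_card => S; rewrite !inE; apply/idP/idP.
      - case/andP => /andP [/andP [/forall_inP Hall /indepP Hind] /eqP Hc] vS.
        apply/imsetP; exists (S :\ v); last by rewrite setD1K.
        rewrite !inE; apply/andP; split; first (apply/andP; split).
        + apply/forall_inP => x; rewrite !inE => /andP [xv xS].
          case/andP: (Hall x xS); rewrite in_cons (negbTE xv) /= => -> -> /=.
          exact: Hind.
        + apply/indepP => x y; rewrite !inE => /andP [_ xS] /andP [_ yS]; exact: Hind.
        + by move: Hc; rewrite (cardsD1 v S) vS add1n => -[->].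
      - case/imsetP => S' ; rewrite !inE => /andP [/andP [/forall_inP Hall /indepP Hind] /eqP Hc] ->.
        have vS' : v \notin S' by apply/negP => /Hall /andP []; rewrite (negbTE vs).
        rewrite setU11 andbT cardsU1 vS' Hc eqxx andbT; apply/andP; split.
        + apply/forall_inP => x; rewrite !inE; case/orP.
          * by move/eqP->; rewrite eqxx okv.
          * by move/Hall => /and3P [-> -> _]; rewrite orbT.
        + apply/indepP => x y; rewrite !inE => /orP [/eqP -> | xS] /orP [/eqP -> | yS].
          * by rewrite adj_irr.
          * by case/and3P: (Hall y yS).
          * by rewrite adj_sym; case/and3P: (Hall x xS).
          * exact: Hind.
    * apply: eq_card0 => S; rewrite !inE; apply/negP.
      case/andP => /andP [/andP [/forall_inP H _] _] vS.
      by case/andP: (H v vS); rewrite okv.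
Qed.

Lemma indep_count_cntf s : uniq s -> (forall x, x \in s) ->
  forall k, indep_count G k = cntf (@adj G) s predT k.
Proof.
move=> Hu Hs k; rewrite -Nset_cntf // /Nset /indep_count; apply: eq_card => S; rewrite !inE.
have -> // : [forall x in S, (x \in s) && predT x] by apply/forall_inP => x _; rewrite Hs.
Qed.
End Count.

Lemma indep_count_mkG n es k :
  indep_count (mkG n es) k = cntf (adjn es) (iota 0 n) predT k.
Proof.
rewrite (@indep_count_cntf (mkG n es) (enum 'I_n)) ?enum_uniq // -?val_enum_ord.
- by symmetry; apply: (@cntf_map _ _ val (@adj (mkG n es)) (adjn es) (enum (ordinal n))) => //.
- by move=> x; rewrite mem_enum.
Qed.

Local Open Scope ring_scope.
Lemma poly_mkG n es (c : seq nat) :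
  all (fun i => cntf (adjn es) (iota 0 n) predT i == nth 0%N c i) (iota 0 n.+1) ->
  (size c <= n.+1)%N ->
  indep_poly (mkG n es) = Poly [seq (x%:Z) | x <- c].
Proof.
move=> /allP H Hc; rewrite /indep_poly card_ord; apply/polyP => i.
rewrite coef_poly coef_Poly.
case: ltnP => Hi.
- rewrite indep_count_mkG (eqP (H i _)); last by rewrite mem_iota.
  case: (ltnP i (size c)) => Hic; first by rewrite (nth_map 0%N).
  by rewrite !nth_default ?size_map.
- by rewrite nth_default // size_map (leq_trans Hc).
Qed.

Lemma P1E : P1 = Poly [seq (x%:Z) | x <- [:: 1; 12; 9]%N].
Proof.
apply/polyP => i; rewrite coef_Poly !coefD !coefZ coef1 coefX coefXn.
by case: i => [|[|[|[|i]]]].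
Qed.
Lemma P2E : P2 = Poly [seq (x%:Z) | x <- [:: 1; 4; 3]%N].
Proof.
apply/polyP => i; rewrite coef_Poly !coefD !coefZ coef1 coefX coefXn.
by case: i => [|[|[|[|i]]]].
Qed.
Lemma P3E : P3 = Poly [seq (x%:Z) | x <- [:: 1; 8; 8]%N].
Proof.
apply/polyP => i; rewrite coef_Poly !coefD !coefZ coef1 coefX coefXn.
by case: i => [|[|[|[|i]]]].
Qed.
Lemma P4E : P4 = Poly [seq (x%:Z) | x <- [:: 1; 15; 45; 27]%N].
Proof.
apply/polyP => i; rewrite coef_Poly !coefD !coefZ coef1 coefX !coefXn.
by case: i => [|[|[|[|i]]]]; rewrite /= ?mulr0 ?mulr1 ?add0r ?addr0 ?nth_nil.
Qed.
Lemma P5E : P5 = Poly [seq (x%:Z) | x <- [:: 1; 13; 21; 9]%N].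
Proof.
apply/polyP => i; rewrite coef_Poly !coefD !coefZ coef1 coefX !coefXn.
by case: i => [|[|[|[|i]]]]; rewrite /= ?mulr0 ?mulr1 ?add0r ?addr0 ?nth_nil.
Qed.
Local Close Scope ring_scope.

Definition conn_b n es := all (fun x => has (adjn es x) (iota 0 x)) (iota 1 n.-1).

Lemma conn_mkG n es : 0 < n -> conn_b n es -> connected_graph (mkG n es).
Proof.
move=> n0 /allP H; split; first by rewrite card_ord.
pose x0 : 'I_n := Ordinal n0.
have Hc : forall x : 'I_n, connect (@adj (mkG n es)) x0 x.
  move=> x; have [m] := ubnP (val x); elim: m x => // m IH x Hm.
  case Ex: (val x) => [|v].
  - by have -> : x = x0 by apply: val_inj; rewrite /= Ex.
  - have : has (adjn es x) (iota 0 x).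
      by apply: H; rewrite mem_iota Ex /= add1n prednK // -Ex ltn_ord.
    case/hasP => y; rewrite mem_iota add0n => /andP [_ yx] Hxy.
    have yn : y < n by apply: ltn_trans yx (ltn_ord x).
    apply: connect_trans (IH (Ordinal yn) _) (connect1 _).
    + by rewrite /= -ltnS (leq_trans _ Hm).
    + by rewrite /= adjn_sym.
move=> x y; apply: connect_trans (Hc y).
rewrite sym_connect_sym; [exact: Hc | exact: adj_sym].
Qed.

Section Sig.
Variable N : nat.
Definition deg (G : Defs.fgraph) (x : vert G) := #|[set y | adj x y]|.
Definition nb2 (G : Defs.fgraph) b (x : vert G) := #|[set y | adj x y && (deg y == b)]|.
Definition cls0 (G : Defs.fgraph) d := #|[set x : vert G | deg x == d]|.
Definition cls2 (G : Defs.fgraph) b c := #|[set x : vert G | nb2 b x == c]|.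
Definition sigG (G : Defs.fgraph) :=
  [seq cls0 G d | d <- iota 0 N] ++ [seq cls2 G p.1 p.2 | p <- [seq (b, c) | b <- iota 0 N, c <- iota 0 N]].

Lemma card_iso (T T' : finType) (f : T -> T') (P : pred T) (P' : pred T') :
  bijective f -> (forall x, P' (f x) = P x) -> #|[set y | P' y]| = #|[set x | P x]|.
Proof.
move=> fb HP; have fi := bij_inj fb.
rewrite -(card_imset _ fi); apply: eq_card => y; rewrite inE.
case: fb => g fg gf; apply/idP/imsetP.
- by move=> Py; exists (g y); rewrite ?inE -?HP gf.
- by case=> x; rewrite inE => Px ->; rewrite HP.
Qed.

Lemma sig_iso (G H : Defs.fgraph) (f : vert G -> vert H) : bijective f ->
  (forall x y, adj (f x) (f y) = adj x y) -> sigG H = sigG G.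
Proof.
move=> fb Hf.
have Hd : forall x, deg (f x) = deg x.
  by move=> x; apply: (card_iso fb) => y; rewrite Hf.
have Hn : forall b x, nb2 b (f x) = nb2 b x.
  by move=> b x; apply: (card_iso fb) => y; rewrite Hf Hd.
congr (_ ++ _); apply: eq_map.
- by move=> d; apply: (card_iso fb) => x; rewrite Hd.
- by move=> p; apply: (card_iso fb) => x; rewrite Hn.
Qed.

Definition degn es n x := count (adjn es x) (iota 0 n).
Definition nb2n es n b x := count (fun y => adjn es x y && (degn es n y == b)) (iota 0 n).
Definition sign n es :=
  [seq count (fun x => degn es n x == d) (iota 0 n) | d <- iota 0 N] ++
  [seq count (fun x => nb2n es n p.1 x == p.2) (iota 0 n) | p <- [seq (b, c) | b <- iota 0 N, c <- iota 0 N]].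

Lemma sig_mkG n es : sigG (mkG n es) = sign n es.
Proof.
have Hd : forall x : 'I_n, deg (G := mkG n es) x = degn es n x.
  by move=> x; rewrite /deg /degn -(card_set_ord _ (adjn es x)).
have Hn : forall b (x : 'I_n), nb2 (G := mkG n es) b x = nb2n es n b x.
  move=> b x; rewrite /nb2 /nb2n -(card_set_ord _ (fun y => adjn es x y && (degn es n y == b))); apply: eq_card => y.
  by rewrite !inE Hd.
congr (_ ++ _); apply: eq_map.
- by move=> d; rewrite /cls0 -(card_set_ord _ (fun x => degn es n x == d)); apply: eq_card => y; rewrite !inE Hd.
- by move=> p; rewrite /cls2 -(card_set_ord _ (fun x => nb2n es n p.1 x == p.2)); apply: eq_card => y; rewrite !inE Hn.
Qed.
End Sig.

Definition sign_fast N n es :=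
  let ds := [seq degn es n y | y <- iota 0 n] in
  let nbs := [seq [seq count (fun y => adjn es x y && (nth 0 ds y == b)) (iota 0 n) | x <- iota 0 n] | b <- iota 0 N] in
  [seq count (fun d' => d' == d) ds | d <- iota 0 N] ++
  [seq count (fun v => v == p.2) (nth [::] nbs p.1) | p <- [seq (b, c) | b <- iota 0 N, c <- iota 0 N]].

Lemma sign_fastE N n es : sign_fast N n es = sign N n es.
Proof.
rewrite /sign_fast /sign; congr (_ ++ _).
- by apply: eq_map => d; rewrite count_map.
- apply/eq_in_map => p; case/allpairsP => [[b c] [bN _ ->]] /=.
  move: bN => /=; rewrite mem_iota add0n => /andP [_ bN].
  rewrite (nth_map 0) ?size_iota // nth_iota // add0n count_map; apply: eq_in_count => x /= _; rewrite /nb2n.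
  congr (_ == _); apply: eq_in_count => y; rewrite mem_iota add0n => /andP [_ yn] /=.
  by rewrite (nth_map 0) ?size_iota // nth_iota.
Qed.

Definition poly_b n es c :=
  all (fun i => cntf (adjn es) (iota 0 n) predT i == nth 0%N c i) (iota 0 n.+1).

Lemma family n (L : seq (seq (nat * nat))) c (P : {poly int}) : 0 < n ->
  P = Poly [seq Posz x | x <- c] -> size c <= n.+1 ->
  all (fun es => conn_b n es && poly_b n es c) L ->
  uniq (map (sign_fast n.+1 n) L) -> at_least_classes (size L) P.
Proof.
move=> n0 HP Hc /allP Hall.
rewrite (eq_map (sign_fastE n.+1 n)) => Hu.
exists (fun i : 'I_(size L) => mkG n (nth [::] L i)); split.
- move=> i; case/andP: (Hall _ (mem_nth [::] (ltn_ord i))) => H1 H2; split.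
  + exact: conn_mkG.
  + by rewrite HP; apply: poly_mkG.
- move=> i j ij [f [fb fadj]].
  have := sig_iso n.+1 fb fadj; rewrite !sig_mkG => E.
  have := @nth_uniq _ [::] (map (sign n.+1 n) L) i j.
  rewrite !size_map !ltn_ord Hu => /(_ isT isT isT).
  rewrite !(nth_map [::]) // E eqxx.
  by move=> /esym/eqP/val_inj Hij; rewrite Hij eqxx in ij.
Qed.

Definition L1 : seq (seq (nat*nat)) := [:: 
  [:: (0,1); (0,2); (0,3); (0,4); (0,5); (0,6); (0,7); (0,8); (0,9); (1,2); (1,3); (1,4); (1,5); (1,6); (1,7); (1,8); (1,9); (1,10); (2,3); (2,4); (2,5); (2,6); (2,7); (2,9); (2,10); (2,11); (3,7); (3,8); (3,9); (3,10); (3,11); (4,5); (4,6); (4,7); (4,8); (4,9); (4,10); (5,6); (5,7); (5,8); (5,9); (5,11); (6,7); (6,8); (6,9); (6,10); (6,11); (7,8); (7,9); (7,10); (7,11); (8,9); (8,10); (8,11); (9,10); (9,11); (10,11)];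
  [:: (0,1); (0,2); (0,3); (0,4); (0,5); (0,6); (0,7); (0,8); (0,9); (1,2); (1,3); (1,4); (1,5); (1,6); (1,7); (1,8); (1,9); (1,10); (1,11); (2,3); (2,4); (2,5); (2,7); (2,8); (2,10); (2,11); (3,4); (3,5); (3,6); (3,7); (3,8); (3,9); (3,10); (3,11); (4,5); (4,6); (4,7); (4,8); (4,9); (5,6); (5,7); (5,8); (5,9); (5,10); (6,7); (6,8); (6,9); (6,10); (6,11); (7,8); (7,10); (8,9); (8,10); (8,11); (9,10); (9,11); (10,11)];
  [:: (0,1); (0,2); (0,3); (0,4); (0,5); (0,6); (0,7); (0,8); (0,9); (0,10); (1,2); (1,4); (1,5); (1,6); (1,7); (1,9); (1,10); (1,11); (2,3); (2,4); (2,6); (2,7); (2,8); (2,9); (2,10); (2,11); (3,4); (3,5); (3,6); (3,7); (3,8); (3,9); (3,10); (3,11); (4,5); (4,6); (4,8); (4,9); (4,10); (4,11); (5,6); (5,8); (5,9); (5,10); (6,7); (6,9); (6,11); (7,8); (7,9); (7,10); (7,11); (8,9); (8,10); (8,11); (9,10); (9,11); (10,11)];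
  [:: (0,1); (0,2); (0,3); (0,4); (0,5); (0,6); (0,7); (0,8); (0,9); (0,10); (0,11); (1,2); (1,4); (1,5); (1,6); (1,7); (1,8); (1,9); (1,11); (2,3); (2,4); (2,5); (2,6); (2,7); (2,8); (2,9); (2,10); (2,11); (3,4); (3,5); (3,7); (3,8); (3,9); (3,10); (3,11); (4,5); (4,6); (4,7); (4,8); (4,10); (4,11); (5,6); (5,7); (5,8); (5,9); (5,10); (5,11); (6,7); (6,8); (6,11); (7,8); (7,9); (7,11); (8,9); (8,10); (8,11); (9,10)];
  [:: (0,1); (0,2); (0,3); (0,4); (0,5); (0,6); (0,7); (0,8); (0,9); (0,10); (1,2); (1,3); (1,4); (1,6); (1,7); (1,8); (1,9); (1,10); (1,11); (2,3); (2,4); (2,5); (2,6); (2,7); (2,8); (2,9); (2,10); (2,11); (3,4); (3,5); (3,6); (3,7); (3,8); (3,9); (3,10); (4,5); (4,6); (4,8); (4,9); (4,11); (5,6); (5,7); (5,8); (5,10); (5,11); (6,7); (6,8); (6,9); (6,10); (6,11); (7,8); (7,9); (7,10); (7,11); (8,10); (8,11); (9,10)];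
  [:: (0,1); (0,2); (0,3); (0,4); (0,5); (0,6); (0,7); (0,8); (0,9); (0,10); (0,11); (1,2); (1,3); (1,4); (1,5); (1,6); (1,7); (1,8); (1,9); (1,10); (1,11); (2,3); (2,6); (2,7); (2,8); (2,9); (2,10); (2,11); (3,4); (3,5); (3,6); (3,7); (3,8); (3,10); (3,11); (4,5); (4,6); (4,7); (4,8); (4,9); (5,6); (5,7); (5,8); (5,9); (5,11); (6,8); (6,10); (6,11); (7,9); (7,10); (7,11); (8,9); (8,10); (8,11); (9,10); (9,11); (10,11)];
  [:: (0,1); (0,2); (0,3); (0,4); (0,5); (0,6); (0,7); (0,8); (0,9); (1,3); (1,4); (1,5); (1,6); (1,7); (1,8); (1,9); (1,10); (1,11); (2,3); (2,4); (2,5); (2,6); (2,7); (2,8); (2,9); (2,10); (2,11); (3,4); (3,5); (3,7); (3,8); (3,9); (3,11); (4,5); (4,6); (4,7); (4,9); (4,10); (4,11); (5,6); (5,8); (5,10); (5,11); (6,7); (6,8); (6,9); (6,10); (6,11); (7,8); (7,9); (7,11); (8,9); (8,10); (8,11); (9,10); (9,11); (10,11)];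
  [:: (0,1); (0,2); (0,3); (0,4); (0,5); (0,6); (0,7); (0,8); (0,9); (0,10); (1,3); (1,4); (1,5); (1,6); (1,7); (1,8); (1,9); (1,10); (1,11); (2,3); (2,4); (2,6); (2,8); (2,9); (2,10); (3,4); (3,5); (3,6); (3,7); (3,8); (3,9); (3,10); (3,11); (4,5); (4,6); (4,7); (4,8); (5,6); (5,7); (5,8); (5,9); (5,10); (5,11); (6,7); (6,8); (6,9); (6,10); (6,11); (7,8); (7,9); (7,10); (7,11); (8,9); (8,11); (9,10); (9,11); (10,11)];
  [:: (0,1); (0,2); (0,3); (0,4); (0,5); (0,6); (0,7); (0,8); (0,9); (0,10); (0,11); (1,2); (1,3); (1,4); (1,5); (1,6); (1,7); (1,8); (1,9); (1,10); (1,11); (2,3); (2,5); (2,6); (2,9); (2,10); (2,11); (3,4); (3,7); (3,8); (3,9); (3,10); (3,11); (4,5); (4,6); (4,7); (4,8); (4,9); (4,10); (4,11); (5,6); (5,8); (5,9); (5,10); (5,11); (6,7); (6,9); (6,10); (6,11); (7,8); (7,9); (7,10); (7,11); (8,11); (9,10); (9,11); (10,11)];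
  [:: (0,1); (0,2); (0,3); (0,4); (0,5); (0,6); (0,7); (0,8); (0,9); (0,10); (1,3); (1,4); (1,5); (1,6); (1,7); (1,8); (1,9); (1,10); (1,11); (2,3); (2,4); (2,5); (2,6); (2,8); (2,9); (2,10); (2,11); (3,4); (3,6); (3,7); (3,8); (3,9); (3,11); (4,5); (4,6); (4,7); (4,8); (4,9); (4,11); (5,6); (5,7); (5,9); (5,10); (5,11); (6,7); (6,8); (6,9); (6,10); (6,11); (7,9); (7,11); (8,9); (8,10); (8,11); (9,10); (9,11); (10,11)]].

Definition L3 : seq (seq (nat*nat)) := [:: 
  [:: (0,1); (0,2); (0,3); (0,4); (0,5); (0,6); (1,3); (1,4); (1,6); (1,7); (2,3); (2,4); (2,5); (3,6); (4,5); (4,6); (4,7); (5,6); (5,7); (6,7)];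
  [:: (0,1); (0,2); (0,3); (0,4); (0,5); (0,6); (1,2); (1,3); (1,4); (1,5); (1,6); (2,3); (2,4); (2,6); (3,4); (3,5); (3,7); (4,6); (5,7); (6,7)];
  [:: (0,1); (0,2); (0,3); (0,4); (0,5); (1,2); (1,3); (1,5); (1,6); (2,3); (2,5); (2,6); (2,7); (3,4); (3,5); (3,6); (3,7); (4,6); (4,7); (6,7)];
  [:: (0,1); (0,2); (0,3); (0,4); (0,5); (1,2); (1,5); (1,6); (1,7); (2,4); (2,5); (2,7); (3,4); (3,6); (4,5); (4,6); (4,7); (5,6); (5,7); (6,7)];
  [:: (0,1); (0,2); (0,3); (0,4); (0,5); (1,2); (1,3); (1,5); (1,6); (1,7); (2,3); (2,4); (2,5); (3,4); (3,6); (3,7); (4,7); (5,6); (5,7); (6,7)];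
  [:: (0,1); (0,2); (0,3); (0,4); (0,5); (0,6); (1,3); (1,4); (1,5); (1,6); (1,7); (2,5); (2,6); (2,7); (3,4); (3,5); (3,6); (3,7); (4,6); (5,7)];
  [:: (0,1); (0,2); (0,3); (0,4); (0,5); (1,2); (1,3); (1,5); (1,6); (2,3); (2,5); (2,6); (2,7); (3,4); (3,7); (4,6); (4,7); (5,6); (5,7); (6,7)];
  [:: (0,1); (0,2); (0,3); (0,4); (0,5); (0,6); (1,5); (1,6); (1,7); (2,3); (2,4); (2,6); (2,7); (3,4); (3,7); (4,6); (4,7); (5,6); (5,7); (6,7)];
  [:: (0,1); (0,2); (0,3); (0,4); (0,5); (1,3); (1,5); (1,6); (1,7); (2,4); (2,5); (2,6); (2,7); (3,4); (3,6); (4,5); (4,6); (4,7); (5,7); (6,7)];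
  [:: (0,1); (0,2); (0,3); (0,4); (0,5); (1,2); (1,4); (1,5); (1,6); (1,7); (2,4); (2,5); (2,7); (3,5); (3,6); (3,7); (4,6); (5,6); (5,7); (6,7)];
  [:: (0,1); (0,2); (0,3); (0,4); (0,5); (1,2); (1,3); (1,4); (1,5); (1,6); (1,7); (2,4); (2,5); (2,7); (3,5); (3,6); (3,7); (4,6); (4,7); (6,7)];
  [:: (0,1); (0,2); (0,3); (0,4); (0,5); (1,3); (1,5); (1,6); (2,3); (2,4); (2,5); (2,6); (2,7); (3,4); (3,7); (4,5); (4,6); (4,7); (5,6); (6,7)];
  [:: (0,1); (0,2); (0,3); (0,4); (0,5); (1,2); (1,3); (1,4); (1,6); (2,3); (2,5); (2,6); (3,4); (3,5); (3,7); (4,5); (4,6); (4,7); (5,7); (6,7)];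
  [:: (0,1); (0,2); (0,3); (0,4); (0,5); (0,6); (1,2); (1,3); (1,5); (1,7); (2,3); (2,4); (2,5); (2,7); (3,4); (3,5); (4,6); (4,7); (5,6); (6,7)];
  [:: (0,1); (0,2); (0,3); (0,4); (0,5); (0,6); (1,3); (1,4); (1,5); (1,6); (1,7); (2,4); (2,5); (2,6); (2,7); (3,5); (3,7); (4,6); (5,7); (6,7)];
  [:: (0,1); (0,2); (0,3); (0,4); (0,5); (1,3); (1,4); (1,5); (2,3); (2,4); (2,6); (2,7); (3,5); (3,6); (3,7); (4,5); (4,6); (4,7); (5,7); (6,7)];
  [:: (0,1); (0,2); (0,3); (0,4); (1,4); (1,5); (1,6); (2,3); (2,4); (2,5); (2,7); (3,4); (3,5); (3,6); (3,7); (4,5); (4,7); (5,6); (5,7); (6,7)];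
  [:: (0,1); (0,2); (0,3); (1,3); (1,4); (1,5); (1,6); (1,7); (2,3); (2,4); (2,6); (3,4); (3,5); (3,6); (4,5); (4,6); (4,7); (5,6); (5,7); (6,7)];
  [:: (0,1); (0,2); (0,3); (0,4); (0,5); (1,2); (1,3); (1,4); (1,5); (1,6); (2,3); (2,5); (2,6); (2,7); (3,4); (3,5); (3,7); (4,5); (4,6); (6,7)];
  [:: (0,1); (0,2); (0,3); (0,4); (0,5); (0,6); (1,2); (1,4); (1,6); (1,7); (2,3); (2,4); (2,6); (3,4); (3,5); (3,7); (4,6); (4,7); (5,7); (6,7)];
  [:: (0,1); (0,2); (0,3); (0,4); (1,2); (1,3); (1,4); (1,5); (1,6); (2,3); (2,4); (2,5); (3,6); (3,7); (4,5); (4,6); (4,7); (5,6); (5,7); (6,7)];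
  [:: (0,1); (0,2); (0,3); (0,4); (0,5); (1,2); (1,3); (1,5); (1,6); (2,3); (2,4); (2,5); (2,6); (2,7); (3,5); (3,6); (4,6); (4,7); (5,6); (6,7)];
  [:: (0,1); (0,2); (0,3); (0,4); (0,5); (1,3); (1,4); (1,5); (1,6); (1,7); (2,3); (2,5); (2,7); (3,5); (3,6); (3,7); (4,6); (5,6); (5,7); (6,7)];
  [:: (0,1); (0,2); (0,3); (0,4); (0,5); (1,2); (1,3); (1,4); (1,5); (1,6); (2,4); (2,5); (2,6); (3,4); (3,5); (3,6); (3,7); (4,6); (4,7); (6,7)];
  [:: (0,1); (0,2); (0,3); (0,4); (0,5); (0,6); (1,2); (1,3); (1,4); (1,5); (2,3); (2,4); (2,5); (2,7); (3,4); (3,5); (3,7); (4,5); (5,6); (6,7)]].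

Definition L4 : seq (seq (nat*nat)) := [:: 
  [:: (0,1); (0,2); (0,3); (0,4); (0,5); (0,6); (0,7); (0,8); (0,9); (1,2); (1,3); (1,4); (1,8); (1,9); (1,10); (1,11); (2,8); (2,9); (2,11); (2,12); (2,13); (2,14); (3,4); (3,5); (3,6); (3,7); (3,11); (3,12); (3,13); (3,14); (4,5); (4,7); (4,8); (4,11); (4,12); (4,14); (5,8); (5,9); (5,10); (5,12); (5,13); (5,14); (6,7); (6,10); (6,12); (6,13); (7,11); (7,12); (7,13); (7,14); (8,9); (8,11); (8,14); (9,10); (9,12); (10,11); (10,14); (11,13); (11,14); (12,13)];
  [:: (0,1); (0,2); (0,3); (0,4); (0,5); (0,6); (0,7); (0,8); (0,9); (1,2); (1,3); (1,4); (1,5); (1,7); (1,10); (1,11); (1,12); (1,13); (2,6); (2,8); (2,9); (2,11); (2,12); (2,13); (2,14); (3,4); (3,5); (3,6); (3,7); (3,8); (3,11); (3,13); (4,5); (4,7); (4,10); (4,11); (4,12); (5,7); (5,10); (5,11); (5,13); (5,14); (6,9); (6,11); (6,12); (6,14); (7,9); (7,13); (7,14); (8,10); (8,11); (8,12); (8,13); (9,13); (9,14); (10,12); (10,14); (11,13); (11,14); (13,14)];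
  [:: (0,1); (0,2); (0,3); (0,4); (0,5); (0,6); (1,2); (1,3); (1,7); (1,8); (1,9); (1,10); (1,11); (2,4); (2,5); (2,9); (2,11); (2,12); (2,13); (2,14); (3,4); (3,6); (3,7); (3,8); (3,10); (3,11); (4,5); (4,7); (4,8); (4,9); (4,10); (4,12); (4,13); (5,6); (5,7); (5,8); (5,9); (5,12); (5,14); (6,7); (6,12); (6,13); (6,14); (7,8); (7,9); (7,11); (7,12); (7,13); (8,10); (8,11); (8,13); (9,10); (9,12); (9,14); (10,14); (11,12); (11,13); (11,14); (12,13); (12,14)];
  [:: (0,1); (0,2); (0,3); (0,4); (0,5); (0,6); (0,7); (0,8); (0,9); (1,2); (1,3); (1,7); (1,9); (1,10); (1,11); (1,12); (1,13); (2,4); (2,11); (2,13); (2,14); (3,5); (3,6); (3,9); (3,10); (3,12); (3,13); (4,5); (4,8); (4,10); (4,11); (4,12); (4,13); (5,6); (5,8); (5,10); (5,12); (6,8); (6,11); (6,12); (6,14); (7,8); (7,9); (7,10); (7,11); (7,12); (7,14); (8,9); (8,11); (9,10); (9,11); (9,12); (9,13); (9,14); (10,12); (10,13); (10,14); (11,13); (11,14); (12,13)]].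

Definition L5 : seq (seq (nat*nat)) := [:: 
  [:: (0,1); (0,2); (0,3); (0,4); (0,5); (0,6); (0,7); (1,2); (1,3); (1,4); (1,5); (1,6); (1,7); (1,8); (1,9); (1,10); (1,11); (1,12); (2,3); (2,5); (2,6); (2,8); (2,9); (2,10); (2,11); (2,12); (3,4); (3,6); (3,7); (3,9); (3,10); (3,11); (4,5); (4,6); (4,7); (4,8); (4,10); (4,11); (4,12); (5,6); (5,7); (5,8); (5,9); (5,10); (6,7); (6,9); (6,10); (6,11); (6,12); (7,8); (7,9); (7,10); (8,9); (8,10); (8,11); (9,11); (10,12)];
  [:: (0,1); (0,2); (0,3); (0,4); (0,5); (0,6); (0,7); (1,3); (1,4); (1,5); (1,7); (1,8); (1,9); (1,10); (2,3); (2,4); (2,5); (2,7); (2,8); (2,9); (2,10); (2,11); (2,12); (3,4); (3,5); (3,6); (3,9); (3,10); (3,11); (3,12); (4,5); (4,6); (4,7); (4,8); (4,9); (4,10); (4,11); (4,12); (5,8); (5,9); (5,10); (5,11); (6,7); (6,8); (6,9); (6,11); (7,9); (7,10); (7,11); (7,12); (8,9); (8,10); (8,11); (8,12); (9,10); (9,11); (10,11)];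
  [:: (0,1); (0,2); (0,3); (0,4); (0,5); (0,6); (0,7); (0,8); (1,5); (1,6); (1,7); (1,8); (1,9); (1,10); (1,11); (2,3); (2,4); (2,5); (2,6); (2,7); (2,8); (2,9); (2,10); (2,11); (3,4); (3,5); (3,6); (3,7); (3,8); (3,9); (3,10); (3,11); (3,12); (4,5); (4,6); (4,7); (4,8); (4,10); (4,11); (5,6); (5,7); (5,8); (5,10); (5,11); (5,12); (6,8); (6,9); (6,11); (6,12); (7,9); (7,11); (7,12); (8,11); (9,11); (10,11); (10,12); (11,12)];
  [:: (0,1); (0,2); (0,3); (0,4); (0,5); (0,6); (0,7); (0,8); (0,9); (1,2); (1,3); (1,4); (1,5); (1,6); (1,8); (1,9); (1,10); (1,11); (2,3); (2,5); (2,6); (2,8); (2,10); (2,11); (3,4); (3,5); (3,6); (3,7); (3,8); (3,10); (3,11); (3,12); (4,6); (4,7); (4,8); (4,10); (4,11); (4,12); (5,6); (5,7); (5,8); (5,9); (5,10); (5,11); (5,12); (6,7); (6,8); (6,9); (6,10); (6,11); (7,8); (7,9); (8,9); (8,10); (9,10); (9,11); (10,12)];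
  [:: (0,1); (0,2); (0,3); (0,4); (0,5); (0,6); (0,7); (0,8); (1,2); (1,4); (1,5); (1,7); (1,8); (1,9); (1,10); (2,3); (2,4); (2,5); (2,6); (2,7); (2,8); (2,9); (2,10); (2,11); (2,12); (3,5); (3,6); (3,9); (3,10); (4,6); (4,7); (4,9); (4,10); (4,11); (5,6); (5,7); (5,8); (5,9); (5,10); (5,11); (5,12); (6,7); (6,8); (6,9); (6,10); (6,11); (6,12); (7,8); (7,9); (7,10); (7,12); (8,9); (8,12); (9,10); (9,11); (10,12); (11,12)]].

Lemma cntf_map_in (A : eqType) (B : Type) (f : A -> B) (r : A -> A -> bool) (r' : B -> B -> bool)
  (s : seq A) : (forall x y, x \in s -> y \in s -> r' (f x) (f y) = r x y) ->
  forall ok ok' k, (forall x, x \in s -> ok' (f x) = ok x) -> cntf r' (map f s) ok' k = cntf r s ok k.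
Proof.
elim: s => [|v s IH] Hr ok ok' k Hok //=.
have Hr' : forall x y, x \in s -> y \in s -> r' (f x) (f y) = r x y.
  by move=> x y xs ys; apply: Hr; rewrite in_cons ?xs ?ys orbT.
case: k => [|k] //; rewrite (IH Hr' ok ok') ?Hok ?mem_head //; last first.
  by move=> x xs; apply: Hok; rewrite in_cons xs orbT.
case: (ok v) => //; congr (_ + _); apply: IH => // x xs.
by rewrite Hok ?Hr ?in_cons ?xs ?eqxx ?orbT.
Qed.

Lemma iso_sym G H : isomorphic G H -> isomorphic H G.
Proof.
case=> f [[g fg gf] Hf]; exists g; split; first by exists f.
by move=> x y; rewrite -Hf !gf.
Qed.

Lemma iso_trans G H K : isomorphic G H -> isomorphic H K -> isomorphic G K.
Proof.
case=> f [fb Hf] [g [gb Hg]]; exists (g \o f); split; first exact: bij_comp.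
by move=> x y /=; rewrite Hg Hf.
Qed.

Definition iso_b n es1 es2 (p : seq nat) :=
  [&& size p == n, uniq p, all (fun x => x < n) p &
   all (fun x => all (fun y => adjn es2 (nth 0 p x) (nth 0 p y) == adjn es1 x y) (iota 0 n)) (iota 0 n)].

Lemma iso_of_b n es1 es2 p : iso_b n.+1 es1 es2 p -> isomorphic (mkG n.+1 es1) (mkG n.+1 es2).
Proof.
case/and4P => /eqP sp up /allP pn /allP Ha.
have Hb : forall x : 'I_n.+1, nth 0 p x < n.+1.
  by move=> x; apply: pn; rewrite mem_nth // sp.
exists (fun x : 'I_n.+1 => (inord (nth 0 p x) : 'I_n.+1)); split.
- apply: injF_bij => x y /(congr1 val) /=; rewrite !inordK // => /eqP.
  by rewrite nth_uniq ?sp // => /eqP /val_inj.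
- move=> x y /=; rewrite !inordK //.
  have xi : val x \in iota 0 n.+1 by rewrite mem_iota add0n ltn_ord.
  have yi : val y \in iota 0 n.+1 by rewrite mem_iota add0n ltn_ord.
  by apply/eqP; move/allP: (Ha x xi); apply.
Qed.

Definition pairs4 := [:: (0,1); (0,2); (0,3); (1,2); (1,3); (2,3)].
Definition pathE := [:: (0,1); (1,2); (2,3)].

Lemma mask_ok (b1 b2 b3 b4 b5 b6 : bool) es :
  es = mask [:: b1; b2; b3; b4; b5; b6] pairs4 ->
  [/\ adjn es 0 1 = b1, adjn es 0 2 = b2, adjn es 0 3 = b3 &
     [/\ adjn es 1 2 = b4, adjn es 1 3 = b5 & adjn es 2 3 = b6]].
Proof. by move=> ->; case: b1; case: b2; case: b3; case: b4; case: b5; case: b6. Qed.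

Lemma check4 (b1 b2 b3 b4 b5 b6 : bool) es :
  es = mask [:: b1; b2; b3; b4; b5; b6] pairs4 ->
  [&& cntf (adjn es) (iota 0 4) predT 2 == 3, cntf (adjn es) (iota 0 4) predT 3 == 0 &
      all (fun i => has (adjn es i) (iota 0 4)) (iota 0 4)] ==>
  has (iso_b 4 es pathE) (permutations (iota 0 4)).
Proof.
by move=> ->; case: b1; case: b2; case: b3; case: b4; case: b5; case: b6; vm_compute.
Qed.

Lemma count1 G : indep_count G 1 = #|vert G|.
Proof.
rewrite /indep_count -(card_imset _ (@set1_inj (vert G))); apply: eq_card => S.
rewrite !inE; apply/andP/imsetP.
- by case=> _ /cards1P [x ->]; exists x.
- case=> x _ ->; rewrite cards1; split => //.
  by apply/indepP => y z; rewrite !inE => /eqP -> /eqP ->; rewrite adj_irr.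
Qed.

Local Open Scope ring_scope.
Lemma P2_to_path (G : Defs.fgraph) : connected_graph G -> indep_poly G = P2 ->
  isomorphic G (mkG 4 pathE).
Proof.
move=> [T0 Hconn] HP.
have coef : forall i, (indep_poly G)`_i = P2`_i by rewrite HP.
have h1 := coef 1%N; rewrite coef_poly P2E coef_Poly /= ltnS T0 count1 in h1.
have h4 : #|vert G| = 4%N by case: h1.
have h2 := coef 2%N; rewrite coef_poly P2E coef_Poly h4 /= in h2.
have h3 := coef 3%N; rewrite coef_poly P2E coef_Poly h4 /= in h3.
case: h2 => h2; case: h3 => h3.
have Hu := enum_uniq (vert G).
have Hm : forall x : vert G, x \in enum (vert G) by move=> x; rewrite mem_enum.
have Hs : size (enum (vert G)) = 4%N by rewrite -cardE.
move: Hm Hs h2 h3 Hconn.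
rewrite (indep_count_cntf (s := enum (vert G))) ?enum_uniq //; last by move=> x; rewrite mem_enum.
rewrite (indep_count_cntf (s := enum (vert G))) ?enum_uniq //; last by move=> x; rewrite mem_enum.
case Es: (enum (vert G)) => [|a [|b [|c [|d [|? ?]]]]] // Hm _ h2 h3 Hconn.
rewrite Es in Hu.
pose es := mask [:: adj a b; adj a c; adj a d; adj b c; adj b d; adj c d] pairs4.
have Hcheck := @check4 (adj a b) (adj a c) (adj a d) (adj b c) (adj b d) (adj c d) es erefl.
have Hmask := @mask_ok (adj a b) (adj a c) (adj a d) (adj b c) (adj b d) (adj c d) es erefl.
clearbody es.
have R : forall i j, (i < 4)%N -> (j < 4)%N -> adj (nth a [:: a; b; c; d] i) (nth a [:: a; b; c; d] j) = adjn es i j.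
  case: Hmask => e01 e02 e03 [e12 e13 e23].
  move=> [|[|[|[|i]]]] [|[|[|[|j]]]] // _ _; cbn [nth];
    rewrite ?adj_irr ?adjn_irr ?e01 ?e02 ?e03 ?e12 ?e13 ?e23 //;
    by rewrite adj_sym adjn_sym ?e01 ?e02 ?e03 ?e12 ?e13 ?e23.
have Hs4 : [:: a; b; c; d] = map (nth a [:: a; b; c; d]) (iota 0 4) by [].
have Hcnt : forall k, cntf (@adj G) [:: a; b; c; d] predT k = cntf (adjn es) (iota 0 4) predT k.
  move=> k; rewrite Hs4; apply: cntf_map_in => [x y|//]; rewrite !mem_iota => /andP [_ xn] /andP [_ yn].
  exact: R.
rewrite !Hcnt in h2 h3.
have Hiso1 : isomorphic (mkG 4 es) G.
  exists (fun i : 'I_4 => nth a [:: a; b; c; d] i); split.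
  - apply: inj_card_bij; last by rewrite card_ord h4.
    move=> x y /eqP; rewrite nth_uniq ?ltn_ord // => /eqP; exact: val_inj.
  - by move=> x y; rewrite R.
have Hni : all (fun i => has (adjn es i) (iota 0 4)) (iota 0 4).
  apply/allP => i; rewrite mem_iota => /andP [_ i4].
  pose j := if i == 0%N then 1%N else 0%N.
  have j4 : (j < 4)%N by rewrite /j; case: (i == 0%N).
  have xy : nth a [:: a; b; c; d] i != nth a [:: a; b; c; d] j.
    by rewrite nth_uniq ?i4 ?j4 // /j; case: i {i4 j j4} => [|i].
  have := Hconn (nth a [:: a; b; c; d] i) (nth a [:: a; b; c; d] j).
  case/connectP => [[|z p]].
  + by move=> _ /= E; rewrite E eqxx in xy.
  + move=> /andP [Hz _] _.
    apply/hasP; exists (index z [:: a; b; c; d]).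
    * by rewrite mem_iota add0n -[4%N]/(size [:: a; b; c; d]) index_mem Hm.
    * by rewrite -R ?nth_index ?Hm // index_mem Hm.
move: Hcheck; rewrite h2 h3 Hni => /implyP /(_ isT) /hasP [p _ Hp].
apply: iso_trans (iso_sym Hiso1) (iso_of_b Hp).
Qed.

Local Close Scope ring_scope.

Lemma at1 k P : at_least_classes k P -> (0 < k)%N -> at_least_classes 1 P.
Proof.
move=> [F [H1 H2]] k0; exists (fun _ => F (Ordinal k0)); split.
- by move=> _; apply: H1.
- by move=> [[|i] Hi] [[|j] Hj].
Qed.

Lemma fam4 : at_least_classes 4 P4.
Proof.
apply: (@family 15 L4 [:: 1; 15; 45; 27]%N); [done | exact: P4E | done | vm_compute; reflexivity | vm_compute; reflexivity].
Qed.
Lemma fam5 : at_least_classes 5 P5.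
Proof.
apply: (@family 13 L5 [:: 1; 13; 21; 9]%N); [done | exact: P5E | done | vm_compute; reflexivity | vm_compute; reflexivity].
Qed.
Lemma fam1 : at_least_classes 10 P1.
Proof.
apply: (@family 12 L1 [:: 1; 12; 9]%N); [done | exact: P1E | done | vm_compute; reflexivity | vm_compute; reflexivity].
Qed.
Lemma fam3 : at_least_classes 25 P3.
Proof.
apply: (@family 8 L3 [:: 1; 8; 8]%N); [done | exact: P3E | done | vm_compute; reflexivity | vm_compute; reflexivity].
Qed.
Lemma fam2 : at_least_classes 1 P2.
Proof.
apply: (@family 4 [:: pathE] [:: 1; 4; 3]%N); [done | exact: P2E | done | vm_compute; reflexivity | vm_compute; reflexivity].
Qed.

Lemma uniq2 : exactly_one_class P2.
Proof.
split.
- exists (mkG 4 pathE); split; first by apply: conn_mkG => //; vm_compute.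
  rewrite P2E; apply: poly_mkG => //; vm_compute; reflexivity.
- move=> G H cG pG cH pH.
  exact: iso_trans (P2_to_path cG pG) (iso_sym (P2_to_path cH pH)).
Qed.

Theorem lemma4p2 :
  (forall P, P \in [:: P1; P2; P3; P4; P5] -> at_least_classes 1 P) /\
  at_least_classes 10 P1 /\
  exactly_one_class P2 /\
  at_least_classes 25 P3 /\
  at_least_classes 4 P4 /\
  at_least_classes 5 P5.
Proof.
split; last by split; [exact: fam1 | split; [exact: uniq2 | split; [exact: fam3 | split; [exact: fam4 | exact: fam5]]]].
move=> P; rewrite !inE => /orP [/eqP -> | /orP [/eqP -> | /orP [/eqP -> | /orP [/eqP -> | /eqP ->]]]].
- exact: at1 fam1 _.
- exact: fam2.
- exact: at1 fam3 _.
- exact: at1 fam4 _.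
- exact: at1 fam5 _.
Qed.
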